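(* Write $z=(z_1,\ldots,z_n)\in\mathbb{C}^n$ and let constants $m\ge 2$, $R>0$, $A>0$, $B>0$, $k\in(0,1)$, and $K>0$ be given. Let \[ \widetilde\Omega_m=\Big\{z\in B(0,R) \;\Big|\; r(z)=\operatorname{Re} z_n - A|z_1|^m + B\Big(\sum_{j=2}^n|z_j|^m+|z_n||z|\Big)<0\Big\}. \] Then there exist positive constants $R_1$ and $C$ such that \[ F^K_{\widetilde\Omega_m}(z,X)\le C\frac{|X_n|}{d_{\widetilde\Omega_m}(z)^{1-\frac{1}{2m}}} \] for all $z\in B(0,R_1)\cap\Lambda(k)$ and all $X\in\mathbb{C}^n$ with $|X|\le K|X_n|$.
   Context: $B(z,R)$ denotes the Euclidean ball in $\mathbb{C}^n$ with center $z$ and radius $R$, and $|\cdot|$ the Euclidean norm. For $0<k<1$, $\Lambda(k)=\{z\in\mathbb{C}^n \mid -\operatorname{Re} z_n>k|z|\}$. $d_{\Omega}(z)$ denotes the Euclidean distance from $z$ to the boundary of $\Omega$. For a domain $\Omega\subset\mathbb{C}^n$, $z\in\Omega$ and $X\in\mathbb{C}^n$, the Kobayashi(–Royden) metric is $F^K_\Omega(z,X)=\inf\{1/\lambda \mid \exists f\colon D\to\Omega \text{ holomorphic},\ f(0)=z,\ f'(0)=\lambda X,\ \lambda>0\}$, where $D$ is the unit disc in $\mathbb{C}$. $X_n$ denotes the $n$-th component of $X$. *)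

(* Defs.v *)
From Stdlib Require Import Reals List.
From Coquelicot Require Import Coquelicot.
Import ListNotations.
Open Scope R_scope.

(* A point of C^n is represented as a function nat -> C; only the
   components 0 .. n-1 are relevant (component j-1 is z_j of the paper). *)
Definition Cn := nat -> C.

Definition rsum (f : nat -> R) (a len : nat) : R :=
  fold_right Rplus 0 (map f (seq a len)).

Definition cnorm (n : nat) (z : Cn) : R :=
  sqrt (rsum (fun j => (Cmod (z j)) ^ 2) 0 n).

Definition csub (z w : Cn) : Cn := fun j => Cminus (z j) (w j).

Definition ball_n (n : nat) (c : Cn) (r : R) (z : Cn) : Prop :=
  cnorm n (csub z c) < r.

Definition Lambda (n : nat) (k : R) (z : Cn) : Prop :=
  - Re (z (n - 1)%nat) > k * cnorm n z.

Definition rfun (n m : nat) (A B : R) (z : Cn) : R :=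
  Re (z (n - 1)%nat) - A * (Cmod (z 0%nat)) ^ m
  + B * (rsum (fun j => (Cmod (z j)) ^ m) 1 (n - 1)
         + Cmod (z (n - 1)%nat) * cnorm n z).

Definition Omega_m (n m : nat) (R0 A B : R) (z : Cn) : Prop :=
  ball_n n (fun _ => 0%C) R0 z /\ rfun n m A B z < 0.

Definition boundary (n : nat) (Om : Cn -> Prop) (w : Cn) : Prop :=
  forall eps, 0 < eps ->
    (exists u, ball_n n w eps u /\ Om u) /\
    (exists u, ball_n n w eps u /\ ~ Om u).

Definition dist_bd (n : nat) (Om : Cn -> Prop) (z : Cn) : Rbar :=
  Glb_Rbar (fun x => exists w, boundary n Om w /\ x = cnorm n (csub z w)).

Definition Disc (w : C) : Prop := Cmod w < 1.

Definition holo_disc (n : nat) (f : C -> Cn) : Prop :=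
  forall j, (j < n)%nat -> forall w, Disc w ->
    ex_derive (K := C_AbsRing) (V := C_NormedModule) (fun t => f t j) w.

(* Kobayashi-Royden metric F^K_Omega(z, X) (value in Rbar; inf of empty = +oo) *)
Definition kobayashi (n : nat) (Om : Cn -> Prop) (z X : Cn) : Rbar :=
  Glb_Rbar (fun x => exists lam : R, 0 < lam /\ x = / lam /\
    exists f : C -> Cn,
      holo_disc n f /\
      (forall w, Disc w -> Om (f w)) /\
      (forall j, (j < n)%nat -> f (RtoC 0) j = z j) /\
      (forall j, (j < n)%nat ->
         is_derive (K := C_AbsRing) (V := C_NormedModule)
           (fun t => f t j) (RtoC 0 : C) (Cmult (RtoC lam) (X j)))).

(* Main.v *)
Require Import Defs.
From Stdlib Require Import Reals Lra Lia Psatz List.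
From Coquelicot Require Import Coquelicot.
Open Scope R_scope.

Lemma rsum_S f a len : rsum f a (S len) = f a + rsum f (S a) len.
Proof. reflexivity. Qed.

Lemma rsum_nonneg f a len : (forall j, 0 <= f j) -> 0 <= rsum f a len.
Proof.
  intro H. revert a. induction len; intro a. unfold rsum; simpl; lra.
  rewrite rsum_S. specialize (IHlen (S a)). specialize (H a). lra.
Qed.

Lemma rsum_le f g a len : (forall j, (a <= j)%nat -> (j < a + len)%nat -> f j <= g j) ->
  rsum f a len <= rsum g a len.
Proof.
  revert a. induction len; intros a H. unfold rsum; simpl; lra.
  rewrite !rsum_S. assert (f a <= g a) by (apply H; lia).
  assert (rsum f (S a) len <= rsum g (S a) len) by (apply IHlen; intros; apply H; lia). lra.
Qed.

Lemma rsum_const c a len : rsum (fun _ => c) a len = INR len * c.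
Proof.
  revert a. induction len; intro a. unfold rsum; simpl; lra.
  rewrite rsum_S, IHlen, S_INR. ring.
Qed.

Lemma rsum_term f a len j : (forall i, 0 <= f i) -> (a <= j)%nat -> (j < a + len)%nat ->
  f j <= rsum f a len.
Proof.
  intro H. revert a. induction len; intros a H1 H2. lia.
  rewrite rsum_S. destruct (Nat.eq_dec j a).
  - subst. pose proof (rsum_nonneg f (S a) len H). lra.
  - pose proof (IHlen (S a) ltac:(lia) ltac:(lia)). specialize (H a). lra.
Qed.

Lemma rsum_sq f a len : (forall i, 0 <= f i) ->
  rsum (fun j => f j ^ 2) a len <= (rsum f a len) ^ 2.
Proof.
  intro H. revert a. induction len; intro a. unfold rsum; simpl; lra.
  rewrite !rsum_S. specialize (IHlen (S a)). pose proof (rsum_nonneg f (S a) len H).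
  specialize (H a). nra.
Qed.

Lemma cnorm_nonneg n z : 0 <= cnorm n z.
Proof. apply sqrt_pos. Qed.

Lemma comp_le n z j : (j < n)%nat -> Cmod (z j) <= cnorm n z.
Proof.
  intro Hj. unfold cnorm. apply Rle_trans with (sqrt (Cmod (z j) ^ 2)).
  { rewrite sqrt_pow2. lra. apply Cmod_ge_0. }
  apply sqrt_le_1_alt.
  apply (rsum_term (fun j0 => Cmod (z j0) ^ 2)). intro; apply pow2_ge_0. lia. lia.
Qed.

Lemma cnorm_le_sum n z : cnorm n z <= rsum (fun j => Cmod (z j)) 0 n.
Proof.
  unfold cnorm. rewrite <- (sqrt_pow2 (rsum (fun j => Cmod (z j)) 0 n)).
  2:{ apply rsum_nonneg. intro; apply Cmod_ge_0. }
  apply sqrt_le_1_alt. apply (rsum_sq (fun j => Cmod (z j))). intro; apply Cmod_ge_0.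
Qed.

Lemma rsum_split0 f n : (1 <= n)%nat -> rsum f 0 n = f 0%nat + rsum f 1 (n - 1).
Proof. intro H. destruct n. lia. rewrite rsum_S. f_equal. f_equal. lia. Qed.

Lemma pow_le_small q p1 p2 : 0 <= q <= 1 -> (p1 <= p2)%nat -> q ^ p2 <= q ^ p1.
Proof.
  intros Hq Hp. replace p2 with (p1 + (p2 - p1))%nat by lia. rewrite pow_add.
  pose proof (pow_le q p1 (proj1 Hq)). pose proof (pow_le q (p2-p1) (proj1 Hq)).
  assert (q ^ (p2 - p1) <= 1). { rewrite <- (pow1 (p2 - p1)). apply pow_incr. lra. }
  nra.
Qed.
Lemma cnorm_bound n u beta : (2 <= n)%nat ->
  (forall j, (1 <= j)%nat -> (j <= n-1)%nat -> Cmod (u j) <= beta) ->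
  cnorm n u <= Cmod (u 0%nat) + INR (n-1) * beta.
Proof.
  intros Hn Hb. eapply Rle_trans. apply cnorm_le_sum.
  rewrite rsum_split0 by lia. rewrite <- rsum_const with (a := 1%nat).
  assert (rsum (fun j => Cmod (u j)) 1 (n-1) <= rsum (fun _ => beta) 1 (n-1)).
  { apply rsum_le. intros. apply Hb; lia. }
  lra.
Qed.

Lemma rfun_bound n m A B u beta gamma rho : (2<=n)%nat -> 0 < A -> 0 < B ->
 (forall j, (1 <= j)%nat -> (j <= n-1)%nat -> Cmod (u j) <= beta) ->
 Cmod (u (n-1)%nat) <= gamma -> Re (u (n-1)%nat) <= rho ->
 rfun n m A B u <= rho - A * Cmod (u 0%nat) ^ m
   + B * (INR (n-1) * beta^m + gamma * (Cmod (u 0%nat) + INR (n-1) * beta)).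
Proof.
  intros Hn HA HB Hb Hg Hr. unfold rfun.
  assert (H1 : rsum (fun j => Cmod (u j) ^ m) 1 (n - 1) <= INR (n-1) * beta ^ m).
  { rewrite <- rsum_const with (a := 1%nat). apply rsum_le. intros.
    apply pow_incr. split. apply Cmod_ge_0. apply Hb; lia. }
  pose proof (cnorm_bound n u beta Hn Hb) as H2.
  pose proof (cnorm_nonneg n u). pose proof (Cmod_ge_0 (u (n-1)%nat)).
  assert (Cmod (u (n - 1)%nat) * cnorm n u <= gamma * (Cmod (u 0%nat) + INR (n-1) * beta)).
  { apply Rmult_le_compat; lra. }
  nra.
Qed.

Lemma rfun_lower n m A B u : 0 < B ->
  Re (u (n-1)%nat) - A * Cmod (u 0%nat) ^ m <= rfun n m A B u.
Proof.
  intros HB. unfold rfun.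
  assert (0 <= rsum (fun j => Cmod (u j) ^ m) 1 (n - 1)).
  { apply rsum_nonneg. intro; apply pow_le, Cmod_ge_0. }
  pose proof (cnorm_nonneg n u). pose proof (Cmod_ge_0 (u (n-1)%nat)).
  assert (0 <= Cmod (u (n - 1)%nat) * cnorm n u) by nra. nra.
Qed.
Lemma pow_2m q m : (1 <= m)%nat -> q ^ (2*m) = q * q ^ (2*m-1).
Proof. intro. replace (2*m)%nat with (S (2*m-1)) at 1 by lia. reflexivity. Qed.

Lemma key_common n m q e : (2 <= n)%nat -> (2 <= m)%nat -> 0 < q <= 1 -> 0 < e <= 1 ->
  let s := q ^ (2*m) in let a := e * q ^ (2*m-1) in
  0 < s /\ s <= q /\ 0 <= a /\ a <= q ^ (2*m-1) /\ q ^ (2*m-1) <= q /\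
  s + a <= 2 * q ^ (2*m-1) /\ (s + a) ^ m <= 2 ^ m * q * s /\ INR (n-1) + 1 = INR n /\
  0 <= INR (n-1).
Proof.
  intros Hn Hm Hq He s a.
  assert (Hp : 0 < q ^ (2*m-1)) by (apply pow_lt; lra).
  assert (Hs : s = q * q ^ (2*m-1)) by (apply pow_2m; lia).
  assert (H1 : q ^ (2*m-1) <= q) by (rewrite <- (pow_1 q) at 2; apply pow_le_small; lia || lra).
  assert (Hsa : s + a <= 2 * q ^ (2*m-1)) by (unfold a; rewrite Hs; nra).
  repeat split.
  - rewrite Hs. nra.
  - rewrite Hs. nra.
  - unfold a; nra.
  - unfold a; nra.
  - exact H1.
  - exact Hsa.
  - apply Rle_trans with ((2 * q ^ (2*m-1)) ^ m).
    + apply pow_incr. split. unfold a. rewrite Hs. nra. exact Hsa.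
    + rewrite Rpow_mult_distr, <- pow_mult.
      assert (q ^ ((2*m-1)*m) <= q ^ (S (2*m))).
      { apply pow_le_small. lra. nia. }
      change (q ^ S (2*m)) with (q * q ^ (2*m)) in H. fold s in H.
      pose proof (pow_lt 2 m ltac:(lra)). nra.
  - rewrite <- S_INR. f_equal. lia.
  - apply pos_INR.
Qed.

Lemma key_disc n m k A B c e q tau x0 : (2 <= n)%nat -> (2 <= m)%nat -> 0 < k < 1 ->
  0 < A -> 0 < B -> 0 < c <= 1 -> 2 * B * c <= k / 4 -> 0 < e ->
  4 * e / k <= 1 -> 4 * e / k <= c / 4 ->
  4 * e / k * (1 + B * INR n * 2 ^ m + 2 * B * (c + 2 * INR n)) <= A * (c / 2) ^ m / 2 ->
  0 < q <= 1 -> B * q * (2 ^ m * INR n + 4 * INR n) <= k / 4 ->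
  0 <= tau <= 1 -> 0 <= x0 ->
  c * tau ^ 2 - q ^ (2*m) - tau * (e * q ^ (2*m-1)) <= x0 ->
  x0 <= q ^ (2*m) + e * q ^ (2*m-1) + c ->
  - k * q ^ (2*m) + tau * (e * q ^ (2*m-1)) - A * x0 ^ m
  + B * (INR (n-1) * (q ^ (2*m) + e * q ^ (2*m-1)) ^ m
         + (q ^ (2*m) + tau * (e * q ^ (2*m-1))) * (x0 + INR (n-1) * (q ^ (2*m) + e * q ^ (2*m-1))))
  < 0.
Proof.
  intros Hn Hm Hk HA HB Hc Hc2 He Hmu1 Hmu2 Hmu3 Hq Hq2 Ht Hx0 Hx1 Hx2.
  set (mu := 4 * e / k) in *.
  assert (Hemu : e <= mu) by (unfold mu; apply Rmult_le_reg_r with k; [lra|];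
    field_simplify; [nra|lra]).
  assert (Hmu0 : 0 < mu) by (unfold mu; apply Rdiv_lt_0_compat; lra).
  assert (He1 : 0 < e <= 1) by lra.
  destruct (key_common n m q e Hn Hm Hq He1) as (Hs0 & Hsq & Ha0 & Ha1 & Hp1 & Hsa & Hsam & HN & Hnn).
  set (s := q ^ (2*m)) in *. set (a := e * q ^ (2*m-1)) in *. set (N := INR n) in *.
  set (nn := INR (n-1)) in *.
  assert (H2m : 0 < 2 ^ m) by (apply pow_lt; lra).
  assert (Hp0 : 0 < q ^ (2*m-1)) by (apply pow_lt; lra).
  destruct (Rle_or_lt (e * tau) (k * q / 4)) as [C1|C2].
  -
    assert (Hs : s = q * q ^ (2*m-1)) by (apply pow_2m; lia).
    assert (T1 : tau * a <= k * s / 4).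
    { unfold a. rewrite Hs. assert (tau * e * q ^ (2*m-1) <= k * q / 4 * q ^ (2*m-1)) by nra. nra. }
    assert (T2 : 0 <= A * x0 ^ m) by (pose proof (pow_le x0 m Hx0); nra).
    assert (T3 : nn * (s + a) ^ m <= N * (2 ^ m * q * s)).
    { apply Rmult_le_compat; try lra. apply pow_le; lra. }
    assert (T4 : 0 <= s + tau * a <= 2 * s) by nra.
    assert (T5 : 0 <= x0 + nn * (s + a) <= c + 2 * N * q) by nra.
    assert (T6 : (s + tau * a) * (x0 + nn * (s + a)) <= 2 * s * (c + 2 * N * q)).
    { apply Rmult_le_compat; lra. }
    assert (T7 : B * (nn * (s + a) ^ m + (s + tau * a) * (x0 + nn * (s + a)))
                 <= s * (B * q * (2 ^ m * N + 4 * N) + 2 * B * c)).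
    { assert (nn * (s + a) ^ m + (s + tau * a) * (x0 + nn * (s + a))
              <= N * (2 ^ m * q * s) + 2 * s * (c + 2 * N * q)) by lra.
      apply Rle_trans with (B * (N * (2 ^ m * q * s) + 2 * s * (c + 2 * N * q))).
      apply Rmult_le_compat_l; lra. nra. }
    assert (s * (B * q * (2 ^ m * N + 4 * N) + 2 * B * c) <= s * (k/2)).
    { apply Rmult_le_compat_l; lra. }
    nra.
  -
    assert (Hqm : q < mu * tau).
    { unfold mu. apply Rmult_lt_reg_r with (k/4). lra. replace (4*e/k*tau*(k/4)) with (e*tau) by (field; lra). lra. }
    assert (Ht0 : 0 < tau) by nra.
    set (T := tau ^ (2*m)).
    assert (HT : 0 < T) by (apply pow_lt; lra).
    assert (HT2 : T = tau * tau ^ (2*m-1)) by (apply pow_2m; lia).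
    assert (Hmu_pow : forall p, (1 <= p)%nat -> mu ^ p <= mu).
    { intros p Hp. rewrite <- (pow_1 mu) at 2. apply pow_le_small. lra. lia. }
    assert (G1 : s <= mu ^ 2 * tau ^ 2).
    { apply Rle_trans with (q ^ 2). apply pow_le_small; lia || lra.
      rewrite <- Rpow_mult_distr. apply pow_incr. lra. }
    assert (G2 : tau * a <= e * mu * tau ^ 2).
    { unfold a. assert (e * q ^ (2*m-1) <= e * (mu * tau)) by (apply Rmult_le_compat_l; lra).
      apply Rle_trans with (tau * (e * (mu * tau))). apply Rmult_le_compat_l; lra. right; ring. }
    assert (Hmu2' : mu ^ 2 <= mu) by (apply Hmu_pow; lia).
    assert (G3 : c / 2 * tau ^ 2 <= x0).
    { assert (mu ^ 2 * tau ^ 2 <= mu * tau ^ 2) by (apply Rmult_le_compat_r; [apply pow2_ge_0|lra]).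
      assert (e * mu * tau ^ 2 <= mu * tau ^ 2) by (pose proof (pow2_ge_0 tau); nra).
      pose proof (pow2_ge_0 tau). nra. }
    assert (G4 : (c / 2) ^ m * T <= x0 ^ m).
    { unfold T. rewrite pow_mult, <- Rpow_mult_distr. apply pow_incr. split.
      apply Rmult_le_pos. lra. apply pow2_ge_0. exact G3. }
    assert (G5 : q ^ (2*m-1) <= mu * tau ^ (2*m-1)).
    { apply Rle_trans with ((mu * tau) ^ (2*m-1)). apply pow_incr; lra.
      rewrite Rpow_mult_distr. apply Rmult_le_compat_r. apply pow_le; lra.
      apply Hmu_pow; lia. }
    assert (G5' : tau * a <= mu * T).
    { unfold a. rewrite HT2. pose proof (pow_le tau (2*m-1) ltac:(lra)).
      assert (e * q ^ (2*m-1) <= 1 * (mu * tau ^ (2*m-1))) by (apply Rmult_le_compat; lra).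
      nra. }
    assert (G6 : s <= mu * T).
    { apply Rle_trans with ((mu * tau) ^ (2*m)). apply pow_incr; lra.
      rewrite Rpow_mult_distr. apply Rmult_le_compat_r. lra. apply Hmu_pow; lia. }
    assert (G7 : nn * (s + a) ^ m <= N * 2 ^ m * (mu * T)).
    { assert ((s + a) ^ m <= 2 ^ m * (mu * T)).
      { apply Rle_trans with (2 ^ m * q * s). exact Hsam.
        assert (q * s <= 1 * (mu * T)) by (apply Rmult_le_compat; lra). nra. }
      assert (0 <= (s + a) ^ m) by (apply pow_le; lra).
      assert (nn * (s + a) ^ m <= N * (2 ^ m * (mu * T))) by (apply Rmult_le_compat; lra).
      lra. }
    assert (0 <= tau * a) by (apply Rmult_le_pos; lra).
    assert (G8 : 0 <= s + tau * a <= 2 * (mu * T)) by lra.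
    assert (nn * (s + a) <= nn * 2) by (apply Rmult_le_compat_l; lra).
    assert (0 <= nn * (s + a)) by (apply Rmult_le_pos; lra).
    assert (G9 : 0 <= x0 + nn * (s + a) <= c + 2 * N) by lra.
    assert (G10 : (s + tau * a) * (x0 + nn * (s + a)) <= 2 * (mu * T) * (c + 2 * N)).
    { apply Rmult_le_compat; lra. }
    assert (G11 : tau * a + B * (nn * (s + a) ^ m + (s + tau * a) * (x0 + nn * (s + a)))
                  <= mu * (1 + B * N * 2 ^ m + 2 * B * (c + 2 * N)) * T).
    { assert (B * (nn * (s + a) ^ m + (s + tau * a) * (x0 + nn * (s + a)))
              <= B * (N * 2 ^ m * (mu * T) + 2 * (mu * T) * (c + 2 * N))).
      { apply Rmult_le_compat_l; lra. }
      nra. }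
    assert (G12 : mu * (1 + B * N * 2 ^ m + 2 * B * (c + 2 * N)) * T <= A * (c / 2) ^ m / 2 * T).
    { apply Rmult_le_compat_r; lra. }
    assert (G13 : A * ((c / 2) ^ m * T) <= A * x0 ^ m) by (apply Rmult_le_compat_l; lra).
    assert (0 < (c/2) ^ m) by (apply pow_lt; lra).
    assert (0 < A * ((c / 2) ^ m * T)) by (apply Rmult_lt_0_compat; [lra| apply Rmult_lt_0_compat; lra]).
    assert (A * (c / 2) ^ m / 2 * T = A * ((c / 2) ^ m * T) / 2) by (field).
    assert (0 < k * s) by (apply Rmult_lt_0_compat; lra).
    lra.
Qed.
Lemma key_pert n m k A B q eta x0 : (2 <= n)%nat -> (2 <= m)%nat -> 0 < k < 1 ->
  0 < A -> 0 < B -> 0 < q <= 1 -> B * q * (2 ^ m * INR n + 4 * INR n) <= k / 4 ->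
  0 <= eta <= k * q ^ (2*m) / 4 -> 0 <= x0 <= q ^ (2*m) + eta ->
  - k * q ^ (2*m) + eta - A * x0 ^ m
  + B * (INR (n-1) * (q ^ (2*m) + eta) ^ m
         + (q ^ (2*m) + eta) * (x0 + INR (n-1) * (q ^ (2*m) + eta))) < 0.
Proof.
  intros Hn Hm Hk HA HB Hq Hq2 He Hx.
  assert (He1 : 0 < 1 <= 1) by lra.
  destruct (key_common n m q 1 Hn Hm Hq He1) as (Hs0 & Hsq & _ & _ & _ & _ & _ & HN & Hnn).
  set (s := q ^ (2*m)) in *. set (N := INR n) in *. set (nn := INR (n-1)) in *.
  assert (H2m : 0 < 2 ^ m) by (apply pow_lt; lra).
  assert (T1 : s + eta <= 2 * s) by nra.
  assert (T2 : (s + eta) ^ m <= 2 ^ m * q * s).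
  { apply Rle_trans with ((2 * s) ^ m). apply pow_incr; lra.
    rewrite Rpow_mult_distr.
    assert (s ^ m <= s ^ 2) by (apply pow_le_small; lia || lra).
    assert (s ^ 2 <= q * s) by (simpl; nra). nra. }
  assert (T3 : nn * (s + eta) ^ m <= N * (2 ^ m * q * s)).
  { apply Rmult_le_compat; try lra. apply pow_le; lra. }
  assert (T4 : x0 + nn * (s + eta) <= N * (2 * s)).
  { assert (nn * (s + eta) <= nn * (2 * s)) by (apply Rmult_le_compat_l; lra). nra. }
  assert (T5 : (s + eta) * (x0 + nn * (s + eta)) <= 2 * s * (N * (2 * s))).
  { apply Rmult_le_compat; try lra. assert (0 <= nn * (s + eta)) by (apply Rmult_le_pos; lra). lra. }
  assert (T6 : 2 * s * (N * (2 * s)) <= 4 * N * q * s).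
  { assert (0 <= N) by lra. assert (s * s <= q * s) by nra. nra. }
  assert (T7 : B * (nn * (s + eta) ^ m + (s + eta) * (x0 + nn * (s + eta)))
               <= s * (B * q * (2 ^ m * N + 4 * N))).
  { apply Rle_trans with (B * (N * (2 ^ m * q * s) + 4 * N * q * s)).
    apply Rmult_le_compat_l; lra. right; ring. }
  assert (s * (B * q * (2 ^ m * N + 4 * N)) <= s * (k / 4)) by (apply Rmult_le_compat_l; lra).
  assert (0 <= A * x0 ^ m) by (apply Rmult_le_pos; [lra| apply pow_le; lra]).
  assert (0 < k * s) by (apply Rmult_lt_0_compat; lra).
  lra.
Qed.
From Stdlib Require Import FunctionalExtensionality.

Lemma cnorm_csub0 n u : cnorm n (csub u (fun _ => 0%C)) = cnorm n u.
Proof.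
  unfold csub. f_equal. apply functional_extensionality; intro j. ring.
Qed.

Definition cj (c : R) (j : nat) : R := if Nat.eqb j 0 then c else 0.

Definition disc_f (z V : Cn) (c : R) : C -> Cn :=
  fun t j => (z j + t * V j + RtoC (cj c j) * (t * t))%C.

Lemma Cmod_le_re (w : C) : Re w <= Cmod w.
Proof. pose proof (re_le_Cmod w). pose proof (Rle_abs (Re w)). lra. Qed.

Lemma disc_in n m k A B R0 c e q z V t :
  (2 <= n)%nat -> (2 <= m)%nat -> 0 < k < 1 ->
  0 < A -> 0 < B -> 0 < c <= 1 -> 2 * B * c <= k / 4 -> 0 < e ->
  4 * e / k <= 1 -> 4 * e / k <= c / 4 ->
  4 * e / k * (1 + B * INR n * 2 ^ m + 2 * B * (c + 2 * INR n)) <= A * (c / 2) ^ m / 2 ->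
  0 < q <= 1 -> B * q * (2 ^ m * INR n + 4 * INR n) <= k / 4 ->
  c + 2 * INR n * q < R0 ->
  cnorm n z = q ^ (2*m) -> Lambda n k z ->
  (forall j, (j < n)%nat -> Cmod (V j) <= e * q ^ (2*m-1)) ->
  Cmod t < 1 -> Omega_m n m R0 A B (disc_f z V c t).
Proof.
  intros Hn Hm Hk HA HB Hc Hc2 He Hmu1 Hmu2 Hmu3 Hq Hq2 HR Hz HL HV Ht.
  unfold Lambda in HL. rewrite Hz in HL.
  set (s := q ^ (2*m)) in *. set (a := e * q ^ (2*m-1)) in *.
  set (tau := Cmod t) in *.
  assert (Hemu : e <= 4 * e / k) by (apply Rmult_le_reg_r with k; [lra|];
    field_simplify; [nra|lra]).
  assert (He1 : 0 < e <= 1) by lra.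
  destruct (key_common n m q e Hn Hm Hq He1) as (Hs0 & Hsq & Ha0 & Ha1 & Hp1 & Hsa & Hsam & HN & Hnn).
  fold s a in Hs0, Hsq, Ha0, Ha1, Hsa, Hsam.
  assert (Ht0 : 0 <= tau) by apply Cmod_ge_0.
  set (u := disc_f z V c t).
  assert (Hzj : forall j, (j < n)%nat -> Cmod (z j) <= s).
  { intros j Hj. rewrite <- Hz. apply comp_le; exact Hj. }
  assert (HtV : forall j, (j < n)%nat -> Cmod (t * V j) <= tau * a).
  { intros j Hj. rewrite Cmod_mult. apply Rmult_le_compat_l. lra. apply HV; exact Hj. }
  assert (Hta : tau * a <= a) by nra.
  assert (Hu1 : forall j, (1 <= j)%nat -> (j <= n-1)%nat -> Cmod (u j) <= s + tau * a).
  { intros j H1 H2. unfold u, disc_f, cj.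
    replace (Nat.eqb j 0) with false by (symmetry; apply Nat.eqb_neq; lia).
    replace (z j + t * V j + RtoC 0 * (t * t))%C with (z j + t * V j)%C by ring.
    eapply Rle_trans. apply Cmod_triangle.
    pose proof (Hzj j ltac:(lia)). pose proof (HtV j ltac:(lia)). lra. }
  assert (Hre : Re (u (n-1)%nat) <= - k * s + tau * a).
  { unfold u, disc_f, cj.
    replace (Nat.eqb (n-1) 0) with false by (symmetry; apply Nat.eqb_neq; lia).
    replace (z (n-1)%nat + t * V (n-1)%nat + RtoC 0 * (t * t))%C
      with (z (n-1)%nat + t * V (n-1)%nat)%C by ring.
    rewrite re_plus. pose proof (Cmod_le_re (t * V (n-1)%nat)).
    pose proof (HtV (n-1)%nat ltac:(lia)). lra. }
  set (x0 := Cmod (u 0%nat)).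
  assert (Hu0 : u 0%nat = (z 0%nat + t * V 0%nat + RtoC c * (t * t))%C) by reflexivity.
  assert (Hctt : Cmod (RtoC c * (t * t)) = c * tau ^ 2).
  { rewrite !Cmod_mult, Cmod_R, Rabs_pos_eq by lra. unfold tau. ring. }
  assert (Hz0 : Cmod (z 0%nat) <= s) by (apply Hzj; lia).
  assert (HtV0 : Cmod (t * V 0%nat) <= tau * a) by (apply HtV; lia).
  assert (Hx0a : x0 <= s + a + c).
  { unfold x0. rewrite Hu0. eapply Rle_trans. apply Cmod_triangle. rewrite Hctt.
    pose proof (Cmod_triangle (z 0%nat) (t * V 0%nat)).
    assert (tau ^ 2 <= 1) by (simpl; assert (tau < 1) by exact Ht; nra). nra. }
  assert (Hx0b : c * tau ^ 2 - s - tau * a <= x0).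
  { rewrite <- Hctt. unfold x0.
    replace (RtoC c * (t * t))%C with (u 0%nat + - (z 0%nat + t * V 0%nat))%C
      by (rewrite Hu0; ring).
    pose proof (Cmod_triangle (u 0%nat) (- (z 0%nat + t * V 0%nat))) as Htr.
    rewrite Cmod_opp in Htr.
    pose proof (Cmod_triangle (z 0%nat) (t * V 0%nat)). lra. }
  assert (Hx00 : 0 <= x0) by apply Cmod_ge_0.
  assert (Hb : forall j, (1 <= j)%nat -> (j <= n-1)%nat -> Cmod (u j) <= s + a).
  { intros. pose proof (Hu1 j H H0). lra. }
  assert (Hg : Cmod (u (n-1)%nat) <= s + tau * a) by (apply Hu1; lia).
  split.
  - unfold ball_n. rewrite cnorm_csub0.
    eapply Rle_lt_trans. apply (cnorm_bound n u (s + a) Hn Hb). fold x0.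
    assert (INR (n-1) * (s + a) <= INR (n-1) * (2 * q)) by (apply Rmult_le_compat_l; lra).
    nra.
  - eapply Rle_lt_trans. apply (rfun_bound n m A B u (s + a) (s + tau * a) _ Hn HA HB Hb Hg Hre).
    fold x0.
    apply (key_disc n m k A B c e q tau x0); try assumption; try lra.
Qed.
Lemma pert_in n m k A B R0 q z u eta :
  (2 <= n)%nat -> (2 <= m)%nat -> 0 < k < 1 -> 0 < A -> 0 < B ->
  0 < q <= 1 -> B * q * (2 ^ m * INR n + 4 * INR n) <= k / 4 ->
  2 * INR n * q < R0 ->
  cnorm n z = q ^ (2*m) -> Lambda n k z ->
  0 <= eta <= k * q ^ (2*m) / 4 ->
  (forall j, (j < n)%nat -> Cmod (u j - z j) <= eta) ->
  Omega_m n m R0 A B u.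
Proof.
  intros Hn Hm Hk HA HB Hq Hq2 HR Hz HL He Hu.
  unfold Lambda in HL. rewrite Hz in HL. set (s := q ^ (2*m)) in *.
  assert (He1 : 0 < 1 <= 1) by lra.
  destruct (key_common n m q 1 Hn Hm Hq He1) as (Hs0 & Hsq & _ & _ & _ & _ & _ & HN & Hnn).
  fold s in Hs0, Hsq.
  assert (Hes : eta <= s) by nra.
  assert (Huj : forall j, (j < n)%nat -> Cmod (u j) <= s + eta).
  { intros j Hj. replace (u j) with (z j + (u j - z j))%C by ring.
    eapply Rle_trans. apply Cmod_triangle.
    pose proof (comp_le n z j Hj). pose proof (Hu j Hj). lra. }
  assert (Hb : forall j, (1 <= j)%nat -> (j <= n-1)%nat -> Cmod (u j) <= s + eta).
  { intros. apply Huj. lia. }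
  assert (Hg : Cmod (u (n-1)%nat) <= s + eta) by (apply Huj; lia).
  assert (Hre : Re (u (n-1)%nat) <= - k * s + eta).
  { replace (u (n-1)%nat) with (z (n-1)%nat + (u (n-1)%nat - z (n-1)%nat))%C by ring.
    rewrite re_plus. pose proof (Cmod_le_re (u (n-1)%nat - z (n-1)%nat)).
    pose proof (Hu (n-1)%nat ltac:(lia)). lra. }
  assert (Hx : 0 <= Cmod (u 0%nat) <= s + eta) by (split; [apply Cmod_ge_0| apply Huj; lia]).
  split.
  - unfold ball_n. rewrite cnorm_csub0.
    eapply Rle_lt_trans. apply (cnorm_bound n u (s + eta) Hn Hb).
    assert (INR (n-1) * (s + eta) <= INR (n-1) * (2 * q)) by (apply Rmult_le_compat_l; lra).
    assert (INR (n-1) * (2 * q) + 2 * q = 2 * INR n * q) by (rewrite <- HN; ring).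
    lra.
  - eapply Rle_lt_trans. apply (rfun_bound n m A B u (s + eta) (s + eta) _ Hn HA HB Hb Hg Hre).
    apply (key_pert n m k A B q eta); try assumption; try lra.
Qed.

Lemma cnorm_const n d : cnorm n (fun _ => RtoC d) <= INR n * Rabs d.
Proof.
  eapply Rle_trans. apply cnorm_le_sum. cbv beta. rewrite Cmod_R. rewrite rsum_const. lra.
Qed.

Lemma zero_boundary n m R0 A B : (2 <= n)%nat -> (2 <= m)%nat -> 0 < R0 -> 0 < A -> 0 < B ->
  boundary n (Omega_m n m R0 A B) (fun _ => 0%C).
Proof.
  intros Hn Hm HR HA HB eps Heps.
  assert (HN : 0 < INR n) by (apply lt_0_INR; lia).
  assert (Hnn : 0 <= INR (n-1)) by apply pos_INR.
  assert (HN1 : INR (n-1) + 1 = INR n) by (rewrite <- S_INR; f_equal; lia).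
  set (d := Rmin 1 (Rmin (eps / (2 * INR n)) (Rmin (R0 / (2 * INR n)) (1 / (4 * B * INR n + 2 * A + 1))))).
  assert (Hd0 : 0 < d).
  { unfold d. repeat apply Rmin_pos; try lra; apply Rdiv_lt_0_compat; nra. }
  assert (Hd1 : d <= 1) by apply Rmin_l.
  assert (Hd2 : d <= eps / (2 * INR n)) by (eapply Rle_trans; [apply Rmin_r| apply Rmin_l]).
  assert (Hd3 : d <= R0 / (2 * INR n)) by
    (eapply Rle_trans; [apply Rmin_r|]; eapply Rle_trans; [apply Rmin_r| apply Rmin_l]).
  assert (Hd4 : d <= 1 / (4 * B * INR n + 2 * A + 1)) by
    (eapply Rle_trans; [apply Rmin_r|]; eapply Rle_trans; [apply Rmin_r| apply Rmin_r]).
  assert (E2 : INR n * d <= eps / 2).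
  { apply Rle_trans with (INR n * (eps / (2 * INR n))). apply Rmult_le_compat_l; lra.
    right; field; lra. }
  assert (E3 : INR n * d <= R0 / 2).
  { apply Rle_trans with (INR n * (R0 / (2 * INR n))). apply Rmult_le_compat_l; lra.
    right; field; lra. }
  assert (E4 : (4 * B * INR n + 2 * A + 1) * d <= 1).
  { apply Rle_trans with ((4 * B * INR n + 2 * A + 1) * (1 / (4 * B * INR n + 2 * A + 1))).
    apply Rmult_le_compat_l; nra. right; field; nra. }
  assert (Hdm : d ^ m <= d ^ 2) by (apply pow_le_small; lia || lra).
  assert (Hdm0 : 0 <= d ^ m) by (apply pow_le; lra).
  split.
  - exists (fun _ => RtoC (- d)). split.
    + unfold ball_n. rewrite cnorm_csub0. eapply Rle_lt_trans. apply cnorm_const.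
      rewrite Rabs_Ropp, Rabs_pos_eq by lra. lra.
    + split.
      * unfold ball_n. rewrite cnorm_csub0. eapply Rle_lt_trans. apply cnorm_const.
        rewrite Rabs_Ropp, Rabs_pos_eq by lra. lra.
      * eapply Rle_lt_trans.
        apply (rfun_bound n m A B (fun _ => RtoC (- d)) d d (- d) Hn HA HB).
        { intros. rewrite Cmod_R, Rabs_Ropp, Rabs_pos_eq; lra. }
        { rewrite Cmod_R, Rabs_Ropp, Rabs_pos_eq; lra. }
        { simpl. lra. }
        rewrite Cmod_R, Rabs_Ropp, Rabs_pos_eq by lra.
        assert (INR (n-1) * d ^ m <= INR n * d ^ 2) by (apply Rmult_le_compat; lra).
        assert (d * (d + INR (n - 1) * d) = INR n * d ^ 2) by (rewrite <- HN1; ring).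
        assert (B * (INR (n-1) * d ^ m + d * (d + INR (n - 1) * d)) <= B * (2 * INR n * d ^ 2))
          by (apply Rmult_le_compat_l; lra).
        assert (0 <= A * d ^ m) by (apply Rmult_le_pos; lra).
        assert (B * (2 * INR n * d ^ 2) <= d / 2).
        { replace (B * (2 * INR n * d ^ 2)) with (d * (2 * B * INR n * d)) by ring.
          assert (2 * B * INR n * d <= 1/2) by nra. nra. }
        lra.
  - exists (fun _ => RtoC d). split.
    + unfold ball_n. rewrite cnorm_csub0. eapply Rle_lt_trans. apply cnorm_const.
      rewrite Rabs_pos_eq by lra. lra.
    + intros [_ Hr].
      pose proof (rfun_lower n m A B (fun _ => RtoC d) HB) as Hl. simpl in Hl.
      rewrite Cmod_R, Rabs_pos_eq in Hl by lra.
      assert (A * d ^ m <= A * d ^ 2) by (apply Rmult_le_compat_l; lra).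
      assert (A * d ^ 2 <= d / 2).
      { replace (A * d ^ 2) with (d * (A * d)) by ring. assert (0 <= 4 * B * INR n * d) by (repeat apply Rmult_le_pos; lra).
        assert (A * d <= 1/2) by lra. assert (0 <= d * (A * d)) by nra. nra. }
      lra.
Qed.
Lemma dist_bounds n m k A B R0 q z :
  (2 <= n)%nat -> (2 <= m)%nat -> 0 < k < 1 -> 0 < A -> 0 < B -> 0 < R0 ->
  0 < q <= 1 -> B * q * (2 ^ m * INR n + 4 * INR n) <= k / 4 ->
  2 * INR n * q < R0 ->
  cnorm n z = q ^ (2*m) -> Lambda n k z ->
  exists d, dist_bd n (Omega_m n m R0 A B) z = Finite d /\ 0 < d <= q ^ (2*m).
Proof.
  intros Hn Hm Hk HA HB HR0 Hq Hq2 HR Hz HL.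
  assert (Hs0 : 0 < q ^ (2*m)) by (apply pow_lt; lra).
  set (eta := k * q ^ (2*m) / 4).
  assert (Heta : 0 < eta) by (unfold eta; apply Rdiv_lt_0_compat; [apply Rmult_lt_0_compat|]; lra).
  unfold dist_bd.
  destruct (Glb_Rbar_correct (fun x => exists w, boundary n (Omega_m n m R0 A B) w /\ x = cnorm n (csub z w))) as [Hlb Hgr].
  set (g := Glb_Rbar _) in *.
  assert (H1 : Rbar_le g (q ^ (2*m))).
  { apply Hlb. exists (fun _ => 0%C). split. apply zero_boundary; assumption.
    rewrite cnorm_csub0. symmetry; exact Hz. }
  assert (H2 : Rbar_le eta g).
  { apply Hgr. intros x [w [Hw Hx]]. simpl. subst x.
    destruct (Rle_or_lt eta (cnorm n (csub z w))) as [Hle|Hlt]. exact Hle. exfalso.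
    set (x := cnorm n (csub z w)) in *.
    destruct (Hw (eta - x) ltac:(lra)) as [_ [u [Hu Hnot]]].
    apply Hnot. unfold ball_n in Hu.
    apply (pert_in n m k A B R0 q z u eta); try assumption.
    - split; [lra | right; reflexivity].
    - intros j Hj.
      replace (u j - z j)%C with (csub u w j + - (csub z w j))%C by (unfold csub; ring).
      eapply Rle_trans. apply Cmod_triangle. rewrite Cmod_opp.
      pose proof (comp_le n (csub u w) j Hj) as Ha. pose proof (comp_le n (csub z w) j Hj) as Hb.
      fold x in Hb. clearbody x eta. assert (Hc : Cmod (csub u w j) < eta - x) by (eapply Rle_lt_trans; [exact Ha| exact Hu]). lra. }
  destruct g as [d| |]; [| simpl in H2; contradiction | simpl in H1; contradiction].
  change (d <= q ^ (2*m)) in H1. change (eta <= d) in H2.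
  exists d. split. reflexivity. clearbody eta. lra.
Qed.
Lemma der_poly (a b c x : C) :
  is_derive (K:=C_AbsRing)(V:=C_NormedModule) (fun t => (a + t*b + c*(t*t))%C) x
    (b + c*(x+x))%C.
Proof.
  pose proof (is_derive_id (K:=C_AbsRing) x) as H1.
  pose proof (is_derive_mult (K:=C_AbsRing) _ _ x _ _ H1 H1 Cmult_comm) as Hm.
  pose proof (is_derive_scal_l (K:=C_AbsRing) (V:=C_NormedModule) _ x _ c Hm) as Hc.
  pose proof (is_derive_scal_l (K:=C_AbsRing) (V:=C_NormedModule) _ x _ b H1) as Hb.
  pose proof (is_derive_const (K:=C_AbsRing) (V:=C_NormedModule) a x) as Ha.
  pose proof (is_derive_plus _ _ _ _ _ (is_derive_plus _ _ _ _ _ Ha Hb) Hc) as H.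
  eapply is_derive_ext; swap 1 2.
  - replace (b + c * (x + x))%C with (plus (plus zero (scal one b)) (scal (plus (mult one x) (mult x one)) c)). exact H.
    change (0 + 1 * b + (1*x + x*1) * c = b + c*(x+x))%C. ring.
  - intro t. change (a + t*b + (t*t)*c = a + t*b + c*(t*t))%C. ring.
Qed.

Lemma kob_bound n m k A B R0 c e q z X lam :
  (2 <= n)%nat -> (2 <= m)%nat -> 0 < k < 1 ->
  0 < A -> 0 < B -> 0 < c <= 1 -> 2 * B * c <= k / 4 -> 0 < e ->
  4 * e / k <= 1 -> 4 * e / k <= c / 4 ->
  4 * e / k * (1 + B * INR n * 2 ^ m + 2 * B * (c + 2 * INR n)) <= A * (c / 2) ^ m / 2 ->
  0 < q <= 1 -> B * q * (2 ^ m * INR n + 4 * INR n) <= k / 4 ->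
  c + 2 * INR n * q < R0 ->
  cnorm n z = q ^ (2*m) -> Lambda n k z -> 0 < lam ->
  (forall j, (j < n)%nat -> Cmod (RtoC lam * X j) <= e * q ^ (2*m-1)) ->
  Rbar_le (kobayashi n (Omega_m n m R0 A B) z X) (Finite (/ lam)).
Proof.
  intros Hn Hm Hk HA HB Hc Hc2 He Hmu1 Hmu2 Hmu3 Hq Hq2 HR Hz HL Hlam HV.
  unfold kobayashi.
  destruct (Glb_Rbar_correct (fun x => exists lam : R, 0 < lam /\ x = / lam /\
    exists f : C -> Cn,
      holo_disc n f /\
      (forall w, Disc w -> Omega_m n m R0 A B (f w)) /\
      (forall j, (j < n)%nat -> f (RtoC 0) j = z j) /\
      (forall j, (j < n)%nat ->
         is_derive (K := C_AbsRing) (V := C_NormedModule)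
           (fun t => f t j) (RtoC 0 : C) (Cmult (RtoC lam) (X j))))) as [Hlb _].
  apply Hlb. exists lam. split. exact Hlam. split. reflexivity.
  set (V := fun j => Cmult (RtoC lam) (X j)).
  exists (disc_f z V c). split; [|split; [|split]].
  - intros j Hj w Hw. exists (V j + RtoC (cj c j) * (w + w))%C.
    apply (der_poly (z j) (V j) (RtoC (cj c j)) w).
  - intros w Hw. apply (disc_in n m k A B R0 c e q z V w); try assumption.
  - intros j Hj. unfold disc_f. ring.
  - intros j Hj.
    replace (Cmult (RtoC lam) (X j)) with (V j + RtoC (cj c j) * (RtoC 0 + RtoC 0))%C.
    apply (der_poly (z j) (V j) (RtoC (cj c j)) (RtoC 0)).
    unfold V. ring.
Qed.
Theorem proposition2p4 (n m : nat) (R0 A B k K : R) :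
  (2 <= n)%nat -> (2 <= m)%nat ->
  0 < R0 -> 0 < A -> 0 < B -> 0 < k < 1 -> 0 < K ->
  exists R1 C0 : R, 0 < R1 /\ 0 < C0 /\
    forall z X : Cn,
      ball_n n (fun _ => 0%C) R1 z -> Lambda n k z ->
      cnorm n X <= K * Cmod (X (n - 1)%nat) ->
      Rbar_le (kobayashi n (Omega_m n m R0 A B) z X)
        (Finite (C0 * Cmod (X (n - 1)%nat)
                 / Rpower (real (dist_bd n (Omega_m n m R0 A B) z))
                          (1 - 1 / (2 * INR m)))).
Proof.
  intros Hn Hm HR0 HA HB Hk HK.
  assert (HN : 0 < INR n) by (apply lt_0_INR; lia).
  assert (H2m : 0 < 2 ^ m) by (apply pow_lt; lra).
  set (c := Rmin 1 (Rmin (k / (8 * B)) (R0 / 2))).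
  assert (Hc0 : 0 < c) by (unfold c; repeat apply Rmin_pos; try lra; apply Rdiv_lt_0_compat; lra).
  assert (Hc1 : c <= 1) by apply Rmin_l.
  assert (Hc01 : 0 < c <= 1) by lra.
  assert (Hc2 : c <= k / (8 * B)) by (eapply Rle_trans; [apply Rmin_r| apply Rmin_l]).
  assert (Hc3 : c <= R0 / 2) by (eapply Rle_trans; [apply Rmin_r| apply Rmin_r]).
  assert (Hc4 : 2 * B * c <= k / 4).
  { apply Rle_trans with (2 * B * (k / (8 * B))). apply Rmult_le_compat_l; lra.
    right; field; lra. }
  set (M := 1 + B * INR n * 2 ^ m + 2 * B * (c + 2 * INR n)).
  assert (HM : 0 < M).
  { unfold M. assert (0 < B * INR n * 2 ^ m) by (repeat apply Rmult_lt_0_compat; lra).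
    assert (0 < 2 * B * (c + 2 * INR n)) by (apply Rmult_lt_0_compat; lra). lra. }
  assert (Hc2m : 0 < (c / 2) ^ m) by (apply pow_lt; lra).
  set (mu := Rmin 1 (Rmin (c / 4) (A * (c / 2) ^ m / (2 * M)))).
  assert (Hmu0 : 0 < mu).
  { unfold mu. repeat apply Rmin_pos; try lra. apply Rdiv_lt_0_compat. nra. lra. }
  assert (Hmu1 : mu <= 1) by apply Rmin_l.
  assert (Hmu2 : mu <= c / 4) by (eapply Rle_trans; [apply Rmin_r| apply Rmin_l]).
  assert (Hmu3' : mu <= A * (c / 2) ^ m / (2 * M)) by (eapply Rle_trans; [apply Rmin_r| apply Rmin_r]).
  assert (Hmu3 : mu * M <= A * (c / 2) ^ m / 2).
  { apply Rle_trans with (A * (c / 2) ^ m / (2 * M) * M). apply Rmult_le_compat_r; lra.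
    right; field; lra. }
  set (e := k * mu / 4).
  assert (He0 : 0 < e) by (unfold e; nra).
  assert (Hemu : 4 * e / k = mu) by (unfold e; field; lra).
  set (L := 4 * B * (2 ^ m * INR n + 4 * INR n)).
  assert (HL0 : 0 < L).
  { unfold L. apply Rmult_lt_0_compat. lra.
    assert (0 < 2 ^ m * INR n) by (apply Rmult_lt_0_compat; lra). lra. }
  set (q0 := Rmin 1 (Rmin (k / L) (R0 / (8 * INR n)))).
  assert (Hq00 : 0 < q0) by (unfold q0; repeat apply Rmin_pos; try lra; apply Rdiv_lt_0_compat; lra).
  assert (Hq01 : q0 <= 1) by apply Rmin_l.
  assert (Hq02 : q0 <= k / L) by (eapply Rle_trans; [apply Rmin_r| apply Rmin_l]).
  assert (Hq03 : q0 <= R0 / (8 * INR n)) by (eapply Rle_trans; [apply Rmin_r| apply Rmin_r]).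
  set (C0 := (K + 1) / e).
  exists (q0 ^ (2*m)), C0. split. apply pow_lt; lra. split. unfold C0; apply Rdiv_lt_0_compat; lra.
  intros z X Hball HLz HX.
  unfold ball_n in Hball. rewrite cnorm_csub0 in Hball.
  set (s := cnorm n z) in *.
  assert (Hs0 : 0 < s).
  { unfold Lambda in HLz. pose proof (comp_le n z (n-1)%nat ltac:(lia)).
    pose proof (re_le_Cmod (z (n-1)%nat)). pose proof (Rabs_Ropp (Re (z (n-1)%nat))).
    pose proof (Rle_abs (- Re (z (n-1)%nat))). fold s in H, HLz.
    assert ((1 - k) * s > 0) by lra.
    apply (Rmult_lt_reg_l (1 - k)). lra. lra. }
  assert (HmR : 0 < INR m) by (apply lt_0_INR; lia).
  set (q := Rpower s (/ (2 * INR m))).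
  assert (Hq0 : 0 < q) by (unfold q, Rpower; apply exp_pos).
  assert (Hqs : q ^ (2*m) = s).
  { rewrite <- Rpower_pow by exact Hq0. unfold q. rewrite Rpower_mult, mult_INR.
    replace (/ (2 * INR m) * (INR 2 * INR m)) with 1 by (simpl; field; lra).
    apply Rpower_1; exact Hs0. }
  assert (Hqq0 : q < q0).
  { destruct (Rlt_or_le q q0) as [H|H]. exact H. exfalso.
    assert (q0 ^ (2*m) <= q ^ (2*m)) by (apply pow_incr; lra). lra. }
  assert (Hq1 : 0 < q <= 1) by lra.
  assert (Hq2 : B * q * (2 ^ m * INR n + 4 * INR n) <= k / 4).
  { apply Rle_trans with (L / 4 * q). right; unfold L; field.
    apply Rle_trans with (L / 4 * (k / L)). apply Rmult_le_compat_l; lra.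
    right; field; lra. }
  assert (HRq : c + 2 * INR n * q < R0).
  { assert (2 * INR n * q <= 2 * INR n * (R0 / (8 * INR n))) by (apply Rmult_le_compat_l; lra).
    assert (2 * INR n * (R0 / (8 * INR n)) = R0 / 4) by (field; lra). lra. }
  assert (HRq' : 2 * INR n * q < R0) by lra.
  assert (Hzq : cnorm n z = q ^ (2*m)) by (rewrite Hqs; reflexivity).
  destruct (dist_bounds n m k A B R0 q z Hn Hm Hk HA HB HR0 Hq1 Hq2 HRq' Hzq HLz) as [d [Hd [Hd0 Hd1]]].
  rewrite Hd. simpl real.
  set (ex := 1 - 1 / (2 * INR m)).
  set (P := q ^ (2*m-1)).
  assert (HP : 0 < P) by (apply pow_lt; lra).
  assert (HD : Rpower d ex <= P).
  { assert (Hex : 0 <= ex).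
    { unfold ex. assert (1 / (2 * INR m) <= 1).
      { assert (1 <= INR m) by (replace 1 with (INR 1) by reflexivity; apply le_INR; lia).
        apply Rmult_le_reg_r with (2 * INR m). lra. field_simplify; lra. }
      lra. }
    apply Rle_trans with (Rpower (q ^ (2*m)) ex). apply Rle_Rpower_l. exact Hex. lra.
    rewrite <- Rpower_pow by exact Hq0. rewrite Rpower_mult.
    unfold P. rewrite <- Rpower_pow by exact Hq0. right. f_equal.
    unfold ex. rewrite minus_INR by lia. rewrite mult_INR. simpl (INR 2). simpl (INR 1). field. lra. }
  assert (HD0 : 0 < Rpower d ex) by (unfold Rpower; apply exp_pos).
  assert (Hmu' : 4 * e / k <= 1) by lra.
  assert (Hmu'' : 4 * e / k <= c / 4) by lra.
  assert (Hmu''' : 4 * e / k * M <= A * (c / 2) ^ m / 2) by (rewrite Hemu; exact Hmu3).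
  pose proof (Cmod_ge_0 (X (n-1)%nat)) as HXn0.
  destruct (Req_dec (Cmod (X (n-1)%nat)) 0) as [HXn|HXn].
  -
    assert (Hall : forall lam, 0 < lam ->
      Rbar_le (kobayashi n (Omega_m n m R0 A B) z X) (Finite (/ lam))).
    { intros lam Hlam. apply (kob_bound n m k A B R0 c e q z X lam); try assumption.
      intros j Hj. rewrite Cmod_mult, Cmod_R, Rabs_pos_eq by lra.
      pose proof (comp_le n X j Hj). pose proof (Cmod_ge_0 (X j)).
      assert (Cmod (X j) = 0) by nra. rewrite H1.
      assert (0 <= e * P) by (apply Rmult_le_pos; lra). unfold P in H2. lra. }
    rewrite HXn. replace (C0 * 0 / Rpower d ex) with 0 by (field; lra).
    destruct (kobayashi n (Omega_m n m R0 A B) z X) as [r| |] eqn:Hk0.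
    + simpl. destruct (Rle_or_lt r 0) as [H|H]. exact H. exfalso.
      specialize (Hall (2 / r) ltac:(apply Rdiv_lt_0_compat; lra)).
      simpl in Hall. replace (/ (2 / r)) with (r / 2) in Hall by (field; lra). lra.
    + specialize (Hall 1 ltac:(lra)). simpl in Hall. exact Hall.
    + simpl. exact I.
  - assert (HXp : 0 < Cmod (X (n-1)%nat)) by lra.
    set (lam := e * P / ((K + 1) * Cmod (X (n-1)%nat))).
    assert (Hlam : 0 < lam) by (unfold lam; apply Rdiv_lt_0_compat; nra).
    eapply Rbar_le_trans. apply (kob_bound n m k A B R0 c e q z X lam); try assumption.
    + intros j Hj. rewrite Cmod_mult, Cmod_R, Rabs_pos_eq by lra.
      pose proof (comp_le n X j Hj).
      apply Rle_trans with (lam * ((K + 1) * Cmod (X (n-1)%nat))).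
      apply Rmult_le_compat_l. lra. nra.
      unfold lam. right. fold P. field. nra.
    + simpl. replace (/ lam) with (C0 * Cmod (X (n - 1)%nat) / P).
      2:{ unfold lam, C0. field. split; [lra | split; [lra|nra]]. }
      unfold Rdiv. apply Rmult_le_compat_l.
      apply Rmult_le_pos. unfold C0; apply Rlt_le, Rdiv_lt_0_compat; lra. lra.
      apply Rinv_le_contravar; lra.
Qed.
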